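(* In the deterministic flow interdiction problem (with the setting below), there exists an optimal interdiction strategy $w$ which is pure and supported on a single-path flow, i.e., $w(\mathbf{f}^* )=1$ for some single-path flow $\mathbf{f}^*\in\mathcal{F}_{\le\gamma}$.
   Context: Let $G=(V,E)$ be a simple directed acyclic graph with capacities $C\in\mathbb{R}_{\ge0}^E$, $s,t\in V$ with a directed $s$-$t$ path, and budget $\gamma$ with $0<\gamma\le\min_{e}C(e)$. An $s$-$t$ flow is $\mathbf{f}\in\mathbb{R}^E$ with $0\le\mathbf{f}(e)\le C(e)$ and flow conservation at all $v\ne s,t$; $val(\mathbf{f})=\sum_{(s,u)\in E}\mathbf{f}(s,u)$; $\mathcal{F}_{\le\gamma}$ is the set of $s$-$t$ flows with value at most $\gamma$. An interdiction strategy is a finitely supported probability distribution $w$ on $\mathcal{F}_{\le\gamma}$. A single-path flow is an $s$-$t$ flow whose positive entries lie on the edges of one $s$-$t$ path. User paths $P=\{p_1,\dots,p_k\}$ are directed paths (edge sets) with initial flow values $\lambda_i\ge0$, $\sum_{i:e\in p_i}\lambda_i\le C(e)$ for all $e$. $T(\mathbf{f},P)$ is the optimal value of: maximize $\sum_i\tilde\lambda_i$ s.t. $\sum_{i:e\in p_i}\tilde\lambda_i\le C(e)-\mathbf{f}(e)$ for all $e$, $0\le\tilde\lambda_i\le\lambda_i$; $\Lambda(\mathbf{f},P)=\sum_i\lambda_i-T(\mathbf{f},P)$, $\Lambda(w,P)=\sum_{\mathbf{f}}w(\mathbf{f})\Lambda(\mathbf{f},P)$. The deterministic flow interdiction problem: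 given $P$ and its initial values, find an interdiction strategy $w$ maximizing $\Lambda(w,P)$. *)

(* Defs.v *)
From HB Require Import structures.
From mathcomp Require Import all_boot all_order all_algebra.
From mathcomp Require Import boolp classical_sets reals.
From Stdlib Require List.
Set Implicit Arguments. Unset Strict Implicit. Unset Printing Implicit Defensive.
Import Order.TTheory GRing.Theory Num.Theory.
Local Open Scope ring_scope.

Section FlowInterdiction.
Variables (R : realType) (V : finType) (E : rel V).

Definition simple_dag : Prop :=
  (forall v, ~~ E v v) /\
  (forall (v : V) (p : seq V), p != [::] -> path E v p -> last v p != v).

Definition path_edges (pq : V * seq V) : seq (V * V) := zip (pq.1 :: pq.2) pq.2.

(* A vector on edges is represented as a function V -> V -> R; only the
   values on edges are meaningful (flows are required to vanish off edges). *)
Variables (C : V -> V -> R) (s t : V).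

Definition is_st_flow (f : V -> V -> R) : Prop :=
  (forall u v, E u v -> 0 <= f u v <= C u v) /\
  (forall u v, ~~ E u v -> f u v = 0) /\
  (forall v, v != s -> v != t ->
     \sum_(u | E u v) f u v = \sum_(u | E v u) f v u).

Definition flow_val (f : V -> V -> R) : R := \sum_(u | E s u) f s u.

Definition in_Fle (gamma : R) (f : V -> V -> R) : Prop :=
  is_st_flow f /\ flow_val f <= gamma.

Definition single_path_flow (f : V -> V -> R) : Prop :=
  is_st_flow f /\
  exists q : seq V, [/\ path E s q, last s q = t &
    forall u v, 0 < f u v -> (u, v) \in path_edges (s, q)].

Variables (k : nat) (P : 'I_k -> V * seq V) (lam : 'I_k -> R).

Definition user_paths_ok : Prop :=
  (forall i, path E (P i).1 (P i).2) /\
  (forall i, 0 <= lam i) /\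
  (forall u v, E u v -> \sum_(i | (u, v) \in path_edges (P i)) lam i <= C u v).

(* T(f, P): optimal value of the LP (a maximum: the feasible set is a
   nonempty compact polytope), expressed as the supremum of feasible values *)
Definition T_val (f : V -> V -> R) : R :=
  sup [set x : R | exists lt : 'I_k -> R,
        [/\ (forall i, 0 <= lt i <= lam i),
            (forall u v, E u v ->
               \sum_(i | (u, v) \in path_edges (P i)) lt i <= C u v - f u v) &
            x = \sum_i lt i]].

Definition Lambda_flow (f : V -> V -> R) : R := \sum_i lam i - T_val f.

(* An interdiction strategy: finitely supported distribution on F_{<= gamma},
   given as a finite list of (probability, flow) atoms. *)
Definition strategy (gamma : R) (w : seq (R * (V -> V -> R))) : Prop :=
  (forall a, List.In a w -> 0 <= a.1) /\
  \sum_(a <- w) a.1 = 1 /\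
  (forall a, List.In a w -> in_Fle gamma a.2).

Definition Lambda_strategy (w : seq (R * (V -> V -> R))) : R :=
  \sum_(a <- w) a.1 * Lambda_flow a.2.

Definition optimal_strategy (gamma : R) (w0 : seq (R * (V -> V -> R))) : Prop :=
  strategy gamma w0 /\
  forall w, strategy gamma w -> Lambda_strategy w <= Lambda_strategy w0.

End FlowInterdiction.

(* Main.v *)
Require Import Defs.
From HB Require Import structures.
From mathcomp Require Import all_boot all_order all_algebra.
From mathcomp Require Import boolp classical_sets reals.
From mathcomp Require Import ring lra.
Set Implicit Arguments. Unset Strict Implicit. Unset Printing Implicit Defensive.
Import Order.TTheory GRing.Theory Num.Theory.
Local Open Scope ring_scope.

Section Graph.
Variables (V : finType) (E : rel V).
Hypothesis dag : simple_dag E.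

Lemma dag_notin x p : path E x p -> x \notin p.
Proof.
move=> pth; apply/negP => xp.
case/splitPr: xp pth => p1 p2.
rewrite cat_path /= => /and3P [h1 h2 _].
have := (proj2 dag) x (rcons p1 x).
rewrite rcons_path h1 h2 last_rcons eqxx.
by case: p1 {h1 h2} => [|? ?] /(_ isT isT).
Qed.

Lemma dag_uniq x p : path E x p -> uniq (x :: p).
Proof.
elim: p x => [|y p IH] x //= /andP [exy pth].
have /= -> := IH y pth; rewrite andbT.
by have := dag_notin (x:=x) (p:=y::p); rewrite /= exy pth; apply.
Qed.

Lemma dag_size x p : path E x p -> (size p < #|V|)%N.
Proof.
move=> /dag_uniq /card_uniqP h.
have := max_card (mem (x :: p)); rewrite h /=.
done.
Qed.

End Graph.


Section Walk.
Variables (R : realType) (V : finType) (E : rel V) (s t : V) (f : V -> V -> R).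
Hypothesis dag : simple_dag E.
Hypothesis fnn : forall u v, E u v -> 0 <= f u v.
Hypothesis fcons : forall v, v != s -> v != t ->
     \sum_(u | E u v) f u v = \sum_(u | E v u) f v u.

Definition rpos := fun a b => E a b && (0 < f a b).

Lemma sum_in_pos u v : E u v -> 0 < f u v -> 0 < \sum_(w | E w v) f w v.
Proof.
move=> euv fp; rewrite (bigD1 u) //=.
have : 0 <= \sum_(i | E i v && (i != u)) f i v.
  by apply: sumr_ge0 => i /andP [] /fnn.
lra.
Qed.

Lemma sum_out_pos u v : E v u -> 0 < f v u -> 0 < \sum_(w | E v w) f v w.
Proof.
move=> euv fp; rewrite (bigD1 u) //=.
have : 0 <= \sum_(i | E v i && (i != u)) f v i.
  by apply: sumr_ge0 => i /andP [] /fnn.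
lra.
Qed.

Lemma sum_in_ex v : 0 < \sum_(w | E w v) f w v -> exists u, rpos u v.
Proof.
case: (boolP [exists u, rpos u v]) => [/existsP //|/existsPn hn].
rewrite big1 ?ltxx // => u euv.
have := hn u; rewrite /rpos euv /= => hh.
by apply/eqP; rewrite eq_le fnn // andbT leNgt.
Qed.

Lemma sum_out_ex v : 0 < \sum_(w | E v w) f v w -> exists u, rpos v u.
Proof.
case: (boolP [exists u, rpos v u]) => [/existsP //|/existsPn hn].
rewrite big1 ?ltxx // => u euv.
have := hn u; rewrite /rpos euv /= => hh.
by apply/eqP; rewrite eq_le fnn // andbT leNgt.
Qed.

Lemma fwd_fuel n v : (exists u, rpos u v) ->
  exists p, path rpos v p && ((last v p \in [:: s; t]) || (n <= size p)%N).
Proof.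
elim: n v => [|n IH] v [u huv]; first by exists [::]; rewrite /= orbT.
case: (boolP (v \in [:: s; t])) => vst; first by exists [::]; rewrite /= vst.
move: vst; rewrite !inE negb_or => /andP [vs vt].
move: huv => /andP [euv fuv].
have := sum_in_pos euv fuv; rewrite fcons // => /sum_out_ex [w hw].
have [p /andP [hp hl]] := IH w (ex_intro _ v hw).
by exists (w :: p); rewrite /= hw hp /= ltnS.
Qed.

Lemma bwd_fuel n u : (exists v, rpos u v) ->
  exists a p, path rpos a p && (last a p == u) && ((a \in [:: s; t]) || (n <= size p)%N).
Proof.
elim: n u => [|n IH] u [v huv]; first by exists u, [::]; rewrite /= eqxx orbT.
case: (boolP (u \in [:: s; t])) => ust; first by exists u, [::]; rewrite /= eqxx ust.
move: ust; rewrite !inE negb_or => /andP [us ut].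
move: huv => /andP [euv fuv].
have := sum_out_pos euv fuv; rewrite -fcons // => /sum_in_ex [w hw].
have [a [p /andP [/andP [hp /eqP hl] ha]]] := IH w (ex_intro _ u hw).
exists a, (rcons p u); rewrite rcons_path hp hl hw last_rcons eqxx /=.
by rewrite size_rcons ltnS.
Qed.

Lemma rpos_E : subrel rpos E. Proof. by move=> a b /andP []. Qed.

Lemma st_walk u v q0 : path E s q0 -> last s q0 = t -> rpos u v ->
  exists Q, [/\ path rpos s Q, last s Q = t & s != t].
Proof.
move=> pq0 lq0 huv.
have [a [p1 /andP [/andP [hp1 /eqP hl1] ha]]] := bwd_fuel #|V| (ex_intro _ v huv).
have [p2 /andP [hp2 hl2]] := fwd_fuel #|V| (ex_intro _ u huv).
have pE1 : path E a p1 by apply: sub_path hp1; apply: rpos_E.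
have pE2 : path E v p2 by apply: sub_path hp2; apply: rpos_E.
move: ha; rewrite leqNgt (dag_size dag pE1) orbF => ha.
move: hl2; rewrite leqNgt (dag_size dag pE2) orbF => hl2.
set W := rcons p1 v ++ p2.
have pW : path rpos a W by rewrite cat_path rcons_path hp1 hl1 huv last_rcons hp2.
have lW : last a W = last v p2 by rewrite last_cat last_rcons.
have pEW : path E a W by apply: sub_path pW; apply: rpos_E.
have W0 : W != [::] by rewrite /W; case: (p1).
have neq : last a W != a := (proj2 dag) a W W0 pEW.
move: ha hl2 neq; rewrite !inE -lW => /orP [] /eqP ha /orP [] /eqP hb; subst a.
- by rewrite hb eqxx.
- by rewrite hb => hts; exists W; split => //; rewrite eq_sym.
- move=> hts; exfalso.
  have := (proj2 dag) s (q0 ++ W).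
  rewrite cat_path pq0 lq0 pEW last_cat lq0 hb eqxx.
  have ne : q0 ++ W != [::] by case: (q0).
  by move/(_ ne isT).
- by rewrite hb eqxx.
Qed.

End Walk.


Section Ind.
Variables (R : realType) (V : finType) (E : rel V).
Implicit Types (x u v : V) (q : seq V).

Fixpoint ind (x : V) (q : seq V) (u v : V) : R :=
  if q is y :: q' then ((u == x) && (v == y))%:R + ind y q' u v else 0.

Lemma ind_ge0 x q u v : 0 <= ind x q u v.
Proof. by elim: q x => [|y q IH] x //=; apply: addr_ge0. Qed.

Lemma ind_pos_zip x q u v : 0 < ind x q u v -> (u, v) \in zip (x :: q) q.
Proof.
elim: q x => [|y q IH] x /=; first by rewrite ltxx.
rewrite inE; case: (boolP ((u == x) && (v == y))) => [/andP [/eqP -> /eqP ->]|_].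
  by rewrite eqxx.
by rewrite add0r => /IH ->; rewrite orbT.
Qed.

Lemma ind_zip_ge1 x q u v : (u, v) \in zip (x :: q) q -> 1 <= ind x q u v.
Proof.
elim: q x => [|y q IH] x //=.
rewrite inE => /orP [/eqP [-> ->]|/IH h].
  by rewrite !eqxx /= lerDl ind_ge0.
by apply: le_trans h _; rewrite lerDr.
Qed.

Lemma zip_mem1 x q u v : (u, v) \in zip (x :: q) q -> u \in x :: q.
Proof.
elim: q x => [|y q IH] x //=.
rewrite !inE => /orP [/eqP [-> _]|/IH h]; first by rewrite eqxx.
by move: h; rewrite inE => ->; rewrite orbT.
Qed.

Lemma zip_path (r : rel V) x q u v : path r x q -> (u, v) \in zip (x :: q) q -> r u v.
Proof.
elim: q x => [|y q IH] x //= /andP [rxy pq].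
by rewrite inE => /orP [/eqP [-> ->] //|/IH]; apply.
Qed.

Lemma ind_le1 x q u v : uniq (x :: q) -> ind x q u v <= 1.
Proof.
elim: q x => [|y q IH] x //= /andP [xn uq].
case: (boolP ((u == x) && (v == y))) => [/andP [/eqP eu _]|_].
  have -> : ind y q u v = 0.
    apply/eqP; rewrite eq_le ind_ge0 andbT leNgt; apply/negP.
    move/ind_pos_zip/zip_mem1; rewrite eu => h.
    by move: xn; rewrite h.
  by rewrite addr0.
by rewrite add0r IH.
Qed.

Lemma ind_offE x q u v : path E x q -> ~~ E u v -> ind x q u v = 0.
Proof.
move=> pq nE; apply/eqP; rewrite eq_le ind_ge0 andbT leNgt; apply/negP.
by move/ind_pos_zip/(zip_path pq); apply/negP.
Qed.

Lemma sum_ind1 (x y v : V) : \sum_u ((u == x) && (v == y))%:R = (v == y)%:R :> R.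
Proof.
rewrite (bigD1 x) //= eqxx /= big1 ?addr0 // => i /negbTE ->; done.
Qed.

Lemma sum_ind2 (x y v : V) : \sum_u ((v == x) && (u == y))%:R = (v == x)%:R :> R.
Proof.
rewrite (bigD1 y) //= eqxx andbT big1 ?addr0 // => i /negbTE ->; by rewrite andbF.
Qed.

Lemma ind_sum_in x q v : \sum_u ind x q u v = (count_mem v q)%:R.
Proof.
elim: q x => [|y q IH] x /=; first by rewrite big1.
by rewrite big_split /= IH sum_ind1 natrD eq_sym.
Qed.

Lemma ind_sum_out x q v : \sum_u ind x q v u = (count_mem v (belast x q))%:R.
Proof.
elim: q x => [|y q IH] x /=; first by rewrite big1.
by rewrite big_split /= IH sum_ind2 natrD eq_sym.
Qed.

Lemma ind_sum_inE x q v : path E x q ->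
  \sum_(u | E u v) ind x q u v = \sum_u ind x q u v.
Proof.
move=> pq; rewrite [RHS](bigID (fun u => E u v)) /= [X in _ + X]big1 ?addr0 //.
by move=> u; apply: ind_offE.
Qed.

Lemma ind_sum_outE x q v : path E x q ->
  \sum_(u | E v u) ind x q v u = \sum_u ind x q v u.
Proof.
move=> pq; rewrite [RHS](bigID (fun u => E v u)) /= [X in _ + X]big1 ?addr0 //.
by move=> u; apply: ind_offE.
Qed.

Lemma count_belast (x v : V) q :
  count_mem v (x :: q) = (count_mem v (belast x q) + (last x q == v))%N.
Proof. by rewrite lastI -cats1 count_cat /= addn0. Qed.

Lemma ind_cons x q v : path E x q -> v != x -> v != last x q ->
  \sum_(u | E u v) ind x q u v = \sum_(u | E v u) ind x q v u.
Proof.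
move=> pq vx vl; rewrite ind_sum_inE // ind_sum_outE // ind_sum_in ind_sum_out.
have := count_belast x v q; rewrite /= eq_sym (negbTE vx) add0n => ->.
by rewrite eq_sym (negbTE vl) addn0.
Qed.

Lemma ind_val x q : path E x q -> uniq (x :: q) ->
  \sum_(u | E x u) ind x q x u = (q != [::])%:R.
Proof.
move=> pq uq; rewrite ind_sum_outE // ind_sum_out.
case: q pq uq => [|y q] //= _ /andP [xn _].
rewrite eqxx add1n; congr (_ %:R); congr (_.+1).
apply/eqP; rewrite -leqn0 leqNgt -has_count; apply/negP => /hasP [z zb /eqP ez].
have : z \in y :: q by rewrite lastI mem_rcons inE zb orbT.
move=> h; move: xn; rewrite -ez h. done.
Qed.

End Ind.


Section TL.
Local Open Scope classical_set_scope.
Local Open Scope ring_scope.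
Variables (R : realType) (V : finType) (E : rel V) (C : V -> V -> R).
Variables (k : nat) (P : 'I_k -> V * seq V) (lam : 'I_k -> R).
Implicit Types (f : V -> V -> R).

Definition Sset f := [set x : R | exists lt : 'I_k -> R,
        [/\ (forall i, 0 <= lt i <= lam i),
            (forall u v, E u v ->
               \sum_(i | (u, v) \in path_edges (P i)) lt i <= C u v - f u v) &
            x = \sum_i lt i]].

Lemma T_valE f : T_val E C P lam f = sup (Sset f). Proof. by []. Qed.

Lemma Sset_ub f : ubound (Sset f) (\sum_i lam i).
Proof.
move=> x [lt [h1 _ ->]]; apply: ler_sum => i _.
by case/andP: (h1 i).
Qed.

Hypothesis lam0 : forall i, 0 <= lam i.

Lemma Sset_ne f : (forall u v, E u v -> f u v <= C u v) -> Sset f !=set0.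
Proof.
move=> cap; exists 0, (fun _ => 0); split.
- by move=> i; rewrite lexx lam0.
- by move=> u v euv; rewrite big1 // subr_ge0 cap.
- by rewrite big1.
Qed.

Lemma Sset_sup f : (forall u v, E u v -> f u v <= C u v) -> has_sup (Sset f).
Proof. by move=> cap; split; [apply: Sset_ne | exists (\sum_i lam i); apply: Sset_ub]. Qed.

Lemma T_mem f lt : (forall i, 0 <= lt i <= lam i) ->
  (forall u v, E u v -> \sum_(i | (u, v) \in path_edges (P i)) lt i <= C u v - f u v) ->
  \sum_i lt i <= T_val E C P lam f.
Proof.
move=> h1 h2; rewrite T_valE; apply: ub_le_sup.
  by exists (\sum_i lam i); apply: Sset_ub.
by exists lt; split.
Qed.

Lemma T_le f : (forall u v, E u v -> f u v <= C u v) -> T_val E C P lam f <= \sum_i lam i.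
Proof. by move=> cap; rewrite T_valE; apply: ge_sup; [apply: Sset_ne|apply: Sset_ub]. Qed.

Lemma T_ge0 f : (forall u v, E u v -> f u v <= C u v) -> 0 <= T_val E C P lam f.
Proof.
move=> cap; have := @T_mem f (fun _ => 0); rewrite big1 //; apply.
- by move=> i; rewrite lexx lam0.
- by move=> u v euv; rewrite big1 // subr_ge0 cap.
Qed.

Lemma T_zero f : user_paths_ok E C P lam -> (forall u v, E u v -> f u v = 0) ->
  T_val E C P lam f = \sum_i lam i.
Proof.
move=> [_ [_ hc]] f0; apply/eqP; rewrite eq_le T_le; last by move=> u v /[dup] /f0 -> /hc; apply: le_trans; apply: sumr_ge0.
apply: T_mem => [i|u v euv]; first by rewrite lexx lam0.
by rewrite f0 // subr0 hc.
Qed.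

Lemma T_convex a b (al be : R) :
  (forall u v, E u v -> a u v <= C u v) -> (forall u v, E u v -> b u v <= C u v) ->
  0 <= al -> 0 <= be -> al + be = 1 ->
  al * T_val E C P lam a + be * T_val E C P lam b <=
  T_val E C P lam (fun u v => al * a u v + be * b u v).
Proof.
move=> ca cb al0 be0 ab1.
apply/ler_addgt0Pr => e e0.
have [x [lx [hx1 hx2 ->]] hx] := sup_adherent e0 (Sset_sup ca).
have [y [ly [hy1 hy2 ->]] hy] := sup_adherent e0 (Sset_sup cb).
rewrite -!T_valE in hx hy.
have : \sum_i (al * lx i + be * ly i) <= T_val E C P lam (fun u v => al * a u v + be * b u v).
  apply: T_mem => [i|u v euv].
    have /andP [? ?] := hx1 i; have /andP [? ?] := hy1 i.
    apply/andP; split; first by apply: addr_ge0; apply: mulr_ge0.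
    by rewrite -[lam i]mul1r -ab1 mulrDl; apply: lerD; apply: ler_wpM2l.
  rewrite big_split /= -!mulr_sumr.
  have -> : C u v - (al * a u v + be * b u v) = al * (C u v - a u v) + be * (C u v - b u v).
    by rewrite -[C u v in LHS]mul1r -ab1; ring.
  by apply: lerD; apply: ler_wpM2l => //; [apply: hx2|apply: hy2].
rewrite big_split /= -!mulr_sumr.
have := ler_wpM2l al0 (ltW hx); have := ler_wpM2l be0 (ltW hy).
rewrite !mulrBr.
have : al * e + be * e = e by rewrite -mulrDl ab1 mul1r.
lra.
Qed.


End TL.


Lemma argmin_seq (R : realType) (T : eqType) (g : T -> R) (l : seq T) :
  l != [::] -> exists2 x, x \in l & forall y, y \in l -> g x <= g y.
Proof.
elim: l => [|a l IH] // _.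
case: (eqVneq l [::]) => [->|ln].
  by exists a; rewrite ?inE // => y; rewrite inE => /eqP ->.
have [x xl hx] := IH ln.
case: (lerP (g a) (g x)) => h.
  exists a; first by rewrite inE eqxx.
  by move=> y; rewrite inE => /orP [/eqP ->//|/hx]; apply: le_trans.
exists x; first by rewrite inE xl orbT.
by move=> y; rewrite inE => /orP [/eqP ->|/hx //]; apply: ltW.
Qed.

Lemma argmax_seq (R : realType) (T : eqType) (g : T -> R) (l : seq T) :
  l != [::] -> exists2 x, x \in l & forall y, y \in l -> g y <= g x.
Proof.
move=> /(argmin_seq (fun x => - g x)) [x xl hx]; exists x => // y /hx.
by rewrite lerN2.
Qed.

Section Main.
Variables (R : realType) (V : finType) (E : rel V) (C : V -> V -> R) (s t : V).
Hypothesis dag : simple_dag E.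
Variables (q0 : seq V).
Hypotheses (pq0 : path E s q0) (lq0 : last s q0 = t).
Implicit Types (f : V -> V -> R).

Definition nflow f := [/\ forall u v, E u v -> 0 <= f u v,
   forall u v, ~~ E u v -> f u v = 0 &
   forall v, v != s -> v != t -> \sum_(u | E u v) f u v = \sum_(u | E v u) f v u].

Definition supp f : {set V * V} := [set e | 0 < f e.1 e.2].

Lemma supp0 f : nflow f -> supp f = finset.set0 -> forall u v, f u v = 0.
Proof.
move=> [fnn foff _] s0 u v.
have : (u, v) \notin supp f by rewrite s0 inE.
rewrite inE /= -leNgt => h.
case: (boolP (E u v)) => euv; last by rewrite foff.
by apply/eqP; rewrite eq_le h fnn.
Qed.

Lemma val_ge0 f : nflow f -> 0 <= flow_val E s f.
Proof. by case=> fnn _ _; apply: sumr_ge0 => u; apply: fnn. Qed.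

Lemma peel f e : nflow f -> e \in supp f ->
  exists Q m f', [/\ path E s Q, last s Q = t, uniq (s :: Q), Q != [::] & 0 < m] /\
     [/\ nflow f', (#|supp f'| < #|supp f|)%N & forall u v, f u v = m * ind R s Q u v + f' u v].
Proof.
move=> nf; have [fnn foff fcons] := nf.
rewrite inE => fe.
have ee : E e.1 e.2.
  by apply/negP => /negP /foff h; move: fe; rewrite h ltxx.
have rp : rpos E f e.1 e.2 by rewrite /rpos ee fe.
have [Q [pQ lQ st]] := st_walk dag fnn fcons pq0 lq0 rp.
have pE : path E s Q by apply: sub_path pQ; apply: rpos_E.
have uQ := dag_uniq dag pE.
have Q0 : Q != [::] by move: lQ st; case: (Q) => //= <-; rewrite eqxx.
have zne : zip (s :: Q) Q != [::] by case: (Q) Q0.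
have [e0 e0z he0] := argmin_seq (fun e => f e.1 e.2) zne.
set m := f e0.1 e0.2.
have m0 : 0 < m by rewrite /m; move: e0z; case: (e0) => a b /(zip_path pQ) /andP [].
set f' := fun u v => f u v - m * ind R s Q u v.
have key : forall u v, m * ind R s Q u v <= f u v.
  move=> u v; case: (boolP (0 < ind R s Q u v)) => [ip|].
    have z := ind_pos_zip ip.
    apply: (@le_trans _ _ m); first by apply: ler_piMr; [exact: ltW | exact: ind_le1].
    by apply: (he0 (u, v)).
  rewrite -leNgt => i0.
  have -> : ind R s Q u v = 0 by apply/eqP; rewrite eq_le i0 ind_ge0.
  rewrite mulr0; case: (boolP (E u v)) => euv; first by apply: fnn.
  by rewrite foff.
exists Q, m, f'; split => //; split => //.
- split.
  + by move=> u v _; rewrite /f' subr_ge0.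
  + by move=> u v nE; rewrite /f' foff // (ind_offE _ pE nE) mulr0 subrr.
  + move=> v vs vt; rewrite /f' !sumrB -!mulr_sumr fcons // ind_cons //.
    by rewrite lQ.
- apply: proper_card; apply/properP; split.
    apply/fintype.subsetP => [[u v]]; rewrite !inE /= /f' => h.
    apply: lt_le_trans h _; rewrite lerBlDr lerDl mulr_ge0 // ?ind_ge0 // ltW //.
  exists e0; first by rewrite inE.
  rewrite inE /= /f' -/m.
  have -> : ind R s Q e0.1 e0.2 = 1.
    by apply/eqP; rewrite eq_le ind_le1 //= ind_zip_ge1 // -surjective_pairing.
  by rewrite mulr1 subrr ltxx.
- by move=> u v; rewrite /f'; ring.
Qed.

Lemma val_dec f f' Q m : path E s Q -> uniq (s :: Q) -> Q != [::] ->
  (forall u v, f u v = m * ind R s Q u v + f' u v) ->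
  flow_val E s f = m + flow_val E s f'.
Proof.
move=> pQ uQ Q0 hd.
rewrite /flow_val (eq_bigr _ (fun u _ => hd s u)) big_split /= -mulr_sumr.
by rewrite ind_val // Q0 mulr1.
Qed.

Lemma edge_le_val n f : nflow f -> (#|supp f| <= n)%N ->
  forall u v, f u v <= flow_val E s f.
Proof.
elim: n f => [|n IH] f nf hn u v.
  have s0 : supp f = finset.set0 by apply/eqP; rewrite -cards_eq0 -leqn0.
  by rewrite (supp0 nf s0) val_ge0.
case: (set_0Vmem (supp f)) => [s0|[e he]]; first by rewrite (supp0 nf s0) val_ge0.
have [Q [m [f' [[pQ lQ uQ Q0 m0] [nf' hc hd]]]]] := peel nf he.
have hn' : (#|supp f'| <= n)%N by rewrite -ltnS (leq_trans hc hn).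
rewrite hd (val_dec pQ uQ Q0 hd); apply: lerD; last exact: IH.
by apply: ler_piMr; [exact: ltW | exact: ind_le1].
Qed.

End Main.


Section Bound.
Variables (R : realType) (V : finType) (E : rel V) (C : V -> V -> R) (s t : V).
Hypothesis dag : simple_dag E.
Variables (q0 : seq V).
Hypotheses (pq0 : path E s q0) (lq0 : last s q0 = t).
Variables (k : nat) (P : 'I_k -> V * seq V) (lam : 'I_k -> R) (gamma M : R).
Hypothesis upok : user_paths_ok E C P lam.
Hypotheses (g0 : 0 < gamma) (gC : forall u v, E u v -> gamma <= C u v) (M0 : 0 <= M).
Hypothesis HM : forall Q, path E s Q -> last s Q = t ->
  Lambda_flow E C P lam (fun u v => gamma * ind R s Q u v) <= M.
Implicit Types (f : V -> V -> R).

Let lam0 : forall i, 0 <= lam i := proj1 (proj2 upok).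

Lemma T_ext f g : (forall u v, f u v = g u v) -> T_val E C P lam f = T_val E C P lam g.
Proof. by move=> h; have -> : f = g by apply/funext => u; apply/funext => v. Qed.

Lemma capf f : nflow E s t f -> flow_val E s f <= gamma -> forall u v, E u v -> f u v <= C u v.
Proof.
move=> nf vg u v euv.
apply: le_trans (gC euv); apply: le_trans vg.
exact: (edge_le_val dag pq0 lq0 nf (leqnn _)).
Qed.

Lemma main_bound n f : nflow E s t f -> (#|supp f| <= n)%N -> flow_val E s f <= gamma ->
  Lambda_flow E C P lam f * gamma <= flow_val E s f * M.
Proof.
elim: n f => [|n IH] f nf hn vg.
  have s0 : supp f = finset.set0 by apply/eqP; rewrite -cards_eq0 -leqn0.
  rewrite /Lambda_flow (T_zero lam0 upok) ?subrr ?mul0r; last by move=> u v _; exact: (supp0 nf s0).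
  by apply: mulr_ge0 => //; exact: (val_ge0 nf).
case: (set_0Vmem (supp f)) => [s0|[e he]].
  rewrite /Lambda_flow (T_zero lam0 upok) ?subrr ?mul0r; last by move=> u v _; exact: (supp0 nf s0).
  by apply: mulr_ge0 => //; exact: (val_ge0 nf).
have [Q [m [f' [[pQ lQ uQ Q0 m0] [nf' hc hd]]]]] := peel dag pq0 lq0 nf he.
have hn' : (#|supp f'| <= n)%N by rewrite -ltnS (leq_trans hc hn).
have hv := val_dec pQ uQ Q0 hd.
have vf'0 := val_ge0 nf'.
set g := fun u v => gamma * ind R s Q u v.
have capg : forall u v, E u v -> g u v <= C u v.
  move=> u v euv; apply: le_trans (gC euv).
  by apply: ler_piMr; [exact: ltW | exact: ind_le1].
have Lg := HM pQ lQ.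
have mle : m <= gamma by move: vg; rewrite hv; lra.
case: (eqVneq m gamma) => [mg|mg].
  have vf0 : flow_val E s f' = 0 by move: vg; rewrite hv mg; lra.
  have f'0 : forall u v, f' u v = 0.
    move=> u v; case: (boolP (E u v)) => euv; last by case: (nf') => _ -> .
    apply/eqP; rewrite eq_le; case: (nf') => -> // _ _; rewrite andbT -vf0.
    exact: (edge_le_val dag pq0 lq0 nf' (leqnn _)).
  have -> : Lambda_flow E C P lam f = Lambda_flow E C P lam g.
    by rewrite /Lambda_flow (@T_ext f g) // => u v; rewrite hd f'0 addr0 mg.
  rewrite hv vf0 addr0 mg mulrC; apply: ler_wpM2l => //; exact: ltW.
have mlt : m < gamma by rewrite lt_neqAle mg.
set c := gamma / (gamma - m).
have gm0 : 0 < gamma - m by rewrite subr_gt0.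
have c0 : 0 < c by apply: divr_gt0.
set f'' := fun u v => c * f' u v.
have nf'' : nflow E s t f''.
  case: nf' => h1 h2 h3; split.
  - by move=> u v euv; apply: mulr_ge0; [exact: ltW | exact: h1].
  - by move=> u v nE; rewrite /f'' h2 // mulr0.
  - by move=> v vs vt; rewrite /f'' -!mulr_sumr h3.
have hn'' : (#|supp f''| <= n)%N.
  apply: leq_trans hn'; apply: subset_leq_card; apply/fintype.subsetP => [[u v]].
  by rewrite !inE /f'' /= pmulr_rgt0.
have vf'' : flow_val E s f'' = c * flow_val E s f' by rewrite /flow_val /f'' mulr_sumr.
have vg'' : flow_val E s f'' <= gamma.
  rewrite vf'' /c mulrC mulrA ler_pdivrMr // [X in _ <= X]mulrC ler_pM2r //.
  by move: vg; rewrite hv; lra.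
have IH' := IH f'' nf'' hn'' vg''.
have capf'' := capf nf'' vg''.
set th := m / gamma.
have thg : th * gamma = m by rewrite /th divfK // gt_eqF.
have th0 : 0 <= th by apply: divr_ge0; apply: ltW.
have th1 : 0 <= 1 - th by rewrite subr_ge0 /th ler_pdivrMr // mul1r.
have thc : (1 - th) * c = 1.
  by rewrite /th /c; field; rewrite !gt_eqF.
have hmix : forall u v, f u v = th * g u v + (1 - th) * f'' u v.
  move=> u v; rewrite hd /g /f'' mulrA thg mulrA thc mul1r //.
have Tc := T_convex P lam0 capg capf'' th0 th1 (subrKC th 1).
rewrite -(T_ext hmix) in Tc.
move: IH' Lg; rewrite /Lambda_flow hv vf''.
set L := \sum_i lam i.
set tf := T_val E C P lam f.
set a := T_val E C P lam g.
set b := T_val E C P lam f''.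
move=> IH' Lg.
have h1 : (L - tf) * gamma <= (L - (th * a + (1 - th) * b)) * gamma.
  by apply: ler_wpM2r; [exact: ltW | rewrite lerD2l lerN2; exact: Tc].
have h2 : (L - (th * a + (1 - th) * b)) * gamma = m * (L - a) + (1 - th) * ((L - b) * gamma).
  by rewrite -thg; ring.
have h3 : m * (L - a) <= m * M by apply: ler_wpM2l => //; exact: ltW.
have h4 : (1 - th) * ((L - b) * gamma) <= (1 - th) * (c * flow_val E s f' * M).
  by apply: ler_wpM2l.
have h5 : (1 - th) * (c * flow_val E s f' * M) = flow_val E s f' * M.
  by rewrite mulrA [_ * (c * _)]mulrA thc mul1r.
rewrite mulrDl; lra.
Qed.

End Bound.


Fixpoint all_seqs (V : finType) n : seq (seq V) :=
  if n is n'.+1 then [seq x :: q | x <- enum V, q <- all_seqs V n'] else [:: [::]].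

Lemma mem_all_seqs (V : finType) (q : seq V) : q \in all_seqs V (size q).
Proof.
elim: q => [|x q IH] /=; first by rewrite inE.
by apply: allpairs_f => //; rewrite mem_enum.
Qed.

Lemma strat_bound (R : realType) (T : Type) (w : seq (R * T)) (L : T -> R) (M : R) :
  (forall a, List.In a w -> 0 <= a.1 /\ L a.2 <= M) ->
  \sum_(a <- w) a.1 * L a.2 <= \sum_(a <- w) a.1 * M.
Proof.
elim: w => [|a w IH] h; first by rewrite !big_nil.
rewrite !big_cons; apply: lerD.
  by have [h1 h2] := h a (or_introl erefl); apply: ler_wpM2l.
by apply: IH => b hb; apply: h; right.
Qed.

Theorem proposition2 (R : realType) (V : finType) (E : rel V)
  (C : V -> V -> R) (s t : V) (gamma : R)
  (k : nat) (P : 'I_k -> V * seq V) (lam : 'I_k -> R) :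
  simple_dag E ->
  (forall u v, E u v -> 0 <= C u v) ->
  (exists q : seq V, path E s q /\ last s q = t) ->
  0 < gamma ->
  (forall u v, E u v -> gamma <= C u v) ->
  user_paths_ok E C P lam ->
  exists fstar : V -> V -> R,
    single_path_flow E C s t fstar /\ in_Fle E C s t gamma fstar /\
    optimal_strategy E C s t P lam gamma [:: (1, fstar)].
Proof.
move=> dag _ [q0 [pq0 lq0]] g0 gC upok.
have lam0 : forall i, 0 <= lam i := proj1 (proj2 upok).
set cands := [seq q <- flatten [seq all_seqs V n | n <- iota 0 #|V|] |
               path E s q && (last s q == t)].
have incand : forall Q, path E s Q -> last s Q = t -> Q \in cands.
  move=> Q pQ lQ; rewrite mem_filter pQ lQ eqxx /=.
  apply/flatten_mapP; exists (size Q); last exact: mem_all_seqs.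
  by rewrite mem_iota add0n (dag_size dag pQ).
have cne : cands != [::] by have := incand q0 pq0 lq0; case: (cands).
set gF := fun Q : seq V => (fun u v => gamma * ind R s Q u v).
have [qs qsin hqs] := argmax_seq (fun Q => Lambda_flow E C P lam (gF Q)) cne.
move: qsin; rewrite mem_filter => /andP [/andP [pqs /eqP lqs] _].
have uqs := dag_uniq dag pqs.
set M := Lambda_flow E C P lam (gF qs).
have capg : forall Q, uniq (s :: Q) -> forall u v, E u v -> gF Q u v <= C u v.
  move=> Q uQ u v euv; apply: le_trans (gC _ _ euv).
  by apply: ler_piMr; [exact: ltW | exact: ind_le1].
have M0 : 0 <= M by rewrite /M /Lambda_flow subr_ge0; apply: T_le => //; apply: capg.
have HM : forall Q, path E s Q -> last s Q = t -> Lambda_flow E C P lam (gF Q) <= M.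
  by move=> Q pQ lQ; apply: hqs; apply: incand.
have stf : is_st_flow E C s t (gF qs).
  split; [|split].
  - move=> u v euv; rewrite capg // andbT; apply: mulr_ge0; [exact: ltW|exact: ind_ge0].
  - by move=> u v nE; rewrite /gF (ind_offE _ pqs nE) mulr0.
  - move=> v vs vt; rewrite /gF -!mulr_sumr ind_cons //; by rewrite lqs.
have valf : flow_val E s (gF qs) <= gamma.
  rewrite /flow_val /gF -mulr_sumr ind_val //.
  by apply: ler_piMr; [exact: ltW|case: (qs != [::])].
exists (gF qs); split; [|split].
- split => //; exists qs; split => // u v.
  by rewrite /gF pmulr_rgt0 // => /ind_pos_zip.
- by split.
- have str : strategy E C s t gamma [:: (1, gF qs)].
    split; [|split].
    + by move=> a [<-|[]] //=.
    + by rewrite big_cons big_nil addr0.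
    + by move=> a [<-|[]] //=; split.
  split => // w [w0 [w1 w2]].
  rewrite /Lambda_strategy big_cons big_nil addr0 mul1r -/M.
  apply: le_trans (strat_bound (M := M) _) _.
    move=> a ha; split; first exact: w0.
    have [[c1 [c2 c3]] va] := w2 a ha.
    have nf : nflow E s t a.2.
      by split => // u v euv; have /andP [] := c1 u v euv.
    have := main_bound dag pq0 lq0 upok g0 gC M0 HM nf (leqnn _) va.
    move=> h; rewrite -(ler_pM2r g0); apply: le_trans h _.
    by rewrite mulrC; apply: ler_wpM2l.
  by rewrite -mulr_suml w1 mul1r.
Qed.
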